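(* Let $n=3N^3$ for an integer $N\ge1$, let $\mathcal{A}\in\mathbb{C}^{n\times n}$, $\mathcal{B}\in\mathbb{C}^{N^3\times n}$, let $M_0\in\mathbb{R}^{n\times n}$ be diagonal with positive diagonal entries, and let $\gamma>0$. Assume $\mathcal{B}\mathcal{A}=0$, and let $\mathcal{H}:=\ker\mathcal{A}'\cap\ker\mathcal{B}$; assume $\dim\mathcal{H}$ is either $0$ or bounded independently of $N$. Let the eigenvalues of the Hermitian positive semidefinite matrix $\mathcal{A}M_0\mathcal{A}'$ be $N_0^{\mathcal{A}}$ zeros followed by the positive eigenvalues $\lambda^{\mathcal{A}}_1\le\cdots\le\lambda^{\mathcal{A}}_{N_1^{\mathcal{A}}}$, and let the eigenvalues of $\mathcal{B}'\mathcal{B}$ be $N_0^{\mathcal{B}}$ zeros followed by the positive eigenvalues $\lambda^{\mathcal{B}}_1\le\cdots\le\lambda^{\mathcal{B}}_{N_1^{\mathcal{B}}}$ (all counted with multiplicity). Then the eigenvalues of $\mathcal{A}M_0\mathcal{A}'+\gamma\mathcal{B}'\mathcal{B}$, listed in nondecreasing order, are $$\underbrace{0,\dots,0}_{\dim\mathcal{H}\text{ zeros}}<\lambda_1\le\lambda_2\le\cdots\le\lambda_m\le\cdots,$$ and $$\{\lambda_1,\dots,\lambda_m,\dots\}=\{\lambda^{\mathcal{A}}_1,\dots,\lambda^{\mathcal{A}}_{N_1^{\mathcal{A}}}\}\cup\{\gamma\lambda^{\mathcal{B}}_1,\dots,\gamma\lambda^{\mathcal{B}}_{N_1^{\mathc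al{B}}}\}.$$
   Context: For a complex matrix $X$, $X'$ denotes its conjugate transpose; $\ker X$ is its null space. *)

(* Defs.v *)
From HB Require Import structures.
From mathcomp Require Import all_boot all_order all_algebra.
Set Implicit Arguments. Unset Strict Implicit. Unset Printing Implicit Defensive.
Import Order.TTheory GRing.Theory Num.Theory.
Local Open Scope ring_scope.

Definition ctmx (C : numClosedFieldType) m n (X : 'M[C]_(m, n)) : 'M[C]_(n, m) :=
  (map_mx Num.conj X)^T.

(* The null space ker X = { x : 'cV_n | X *m x = 0 }, represented (as is
   customary in mxalgebra) as the row space of a matrix of row vectors:
   x^T *m X^T = 0. *)
Definition kerC (C : numClosedFieldType) m n (X : 'M[C]_(m, n)) : 'M[C]_n :=
  kermx X^T.

(* Multiset of eigenvalues of a square matrix given as: k zeros followed by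
   the sorted positive values s (with multiplicity), via the characteristic
   polynomial. *)
Definition eig_zeros_then (C : numClosedFieldType) n (X : 'M[C]_n)
    (k : nat) (s : seq C) : Prop :=
  [/\ char_poly X = 'X^k * \prod_(x <- s) ('X - x%:P),
      all (fun x => 0 < x) s & sorted <=%R s].

(* Main.v *)
Require Import Defs.
From HB Require Import structures.
From mathcomp Require Import all_boot all_order all_algebra.
From mathcomp Require Import sesquilinear spectral.
Import Order.TTheory GRing.Theory Num.Theory.
Local Open Scope ring_scope.

Section Helpers.
Set Implicit Arguments. Unset Strict Implicit. Unset Printing Implicit Defensive.
Section Aux.
Variable C : numClosedFieldType.

Lemma ctmxM m n p (X : 'M[C]_(m, n)) (Y : 'M[C]_(n, p)) :
  ctmx (X *m Y) = ctmx Y *m ctmx X.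
Proof. by rewrite /ctmx map_mxM trmx_mul. Qed.

Lemma Xn_cancel (i j : nat) (p q : {poly C}) :
  p.[0] != 0 -> q.[0] != 0 -> 'X^i * p = 'X^j * q -> p = q.
Proof.
wlog le_ij : i j p q / (i <= j)%N.
  move=> W hp hq E; case: (leqP i j) => h; first exact: W E.
  by apply/esym/(W j i) => //; apply: ltnW.
move=> hp hq; rewrite -(subnKC le_ij) exprD -mulrA.
move/(mulfI (monic_neq0 (monicXn _ _))) => E; move: hp; rewrite E.
case: (j - i)%N => [|k]; first by rewrite expr0 mul1r.
by rewrite hornerM hornerXn expr0n mul0r eqxx.
Qed.

Lemma tr_form k p (Y : 'M[C]_(k, p)) (e : 'rV[C]_p) :
  \tr (Y *m diag_mx e *m ctmx Y) = \sum_i \sum_j e 0 j * `|Y i j| ^+ 2.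
Proof.
rewrite /mxtrace; apply: eq_bigr => i _; rewrite mxE; apply: eq_bigr => j _.
rewrite mul_mx_diag !mxE.
rewrite normCK mulrAC.
exact: mulrC.
Qed.

Lemma tr_form_ge0 k p (Y : 'M[C]_(k, p)) (e : 'rV[C]_p) :
  (forall j, 0 < e 0 j) -> 0 <= \tr (Y *m diag_mx e *m ctmx Y).
Proof.
move=> he; rewrite tr_form; apply: sumr_ge0 => i _; apply: sumr_ge0 => j _.
exact: (mulr_ge0 (ltW (he j)) (exprn_ge0 _ (normr_ge0 _))).
Qed.

Lemma tr_form_eq0 k p (Y : 'M[C]_(k, p)) (e : 'rV[C]_p) :
  (forall j, 0 < e 0 j) -> \tr (Y *m diag_mx e *m ctmx Y) = 0 -> Y = 0.
Proof.
move=> he; rewrite tr_form => H; apply/matrixP => i j; rewrite mxE.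
have ge0 : forall i j, 0 <= e 0 j * `|Y i j| ^+ 2.
  by move=> i' j'; exact: (mulr_ge0 (ltW (he j')) (exprn_ge0 _ (normr_ge0 _))).
have H1 := psumr_eq0P (fun i _ => sumr_ge0 _ (fun j _ => ge0 i j)) H (i:=i) isT.
have := psumr_eq0P (fun j _ => ge0 i j) H1 (i:=j) isT.
move/eqP; rewrite mulf_eq0 (gt_eqF (he j)) /= expf_eq0 /= normr_eq0.
by move/eqP.
Qed.


Lemma ctmx_trct m n (A : 'M[C]_(m, n)) : ctmx ((ctmx A)^T) = A^T.
Proof. by apply/matrixP => i j; rewrite /ctmx !mxE conjCK. Qed.

Lemma ctmx_tr m n (B : 'M[C]_(m, n)) : ctmx (B^T) = (ctmx B)^T.
Proof. by apply/matrixP => i j; rewrite /ctmx !mxE. Qed.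

Lemma ker_eq n m (A : 'M[C]_n) (B : 'M[C]_(m, n)) (d : 'rV[C]_n) (g : C) :
  (forall i, 0 < d 0 i) -> 0 < g ->
  \rank (kerC (ctmx A) :&: kerC B)%MS =
  \rank (kermx (A *m diag_mx d *m ctmx A + g *: (ctmx B *m B))^T).
Proof.
move=> hd hg; set M := _ + _.
have MT : M^T = (ctmx A)^T *m diag_mx d *m A^T + g *: (B^T *m (ctmx B)^T).
  by rewrite /M linearD /= linearZ /= !trmx_mul tr_diag_mx mulmxA.
apply: eqmx_rank; apply/andP; split.
  set W := (kerC _ :&: _)%MS.
  have h1 : W *m (ctmx A)^T = 0 by apply/eqP; rewrite -sub_kermx capmxSl.
  have h2 : W *m B^T = 0 by apply/eqP; rewrite -sub_kermx capmxSr.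
  rewrite sub_kermx MT mulmxDr -scalemxAr !mulmxA.
  by rewrite h1 h2 !mul0mx scaler0 addr0.
set K := kermx M^T.
have KM : K *m M^T = 0 := mulmx_ker _.
set Y := K *m (ctmx A)^T; set Z := K *m B^T.
have E : K *m M^T *m ctmx K = Y *m diag_mx d *m ctmx Y +
    g *: (Z *m diag_mx (const_mx 1) *m ctmx Z).
  rewrite MT /Y /Z !ctmxM ctmx_trct ctmx_tr diag_const_mx mulmx1.
  by rewrite mulmxDr mulmxDl -scalemxAr -scalemxAl !mulmxA.
have h1 : forall j, 0 < (const_mx 1 : 'rV[C]_m) 0 j by move=> j; rewrite mxE ltr01.
have := congr1 mxtrace E; rewrite KM mul0mx mxtrace0 mxtraceD mxtraceZ => /esym/eqP.
rewrite paddr_eq0; last 2 first.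
- exact: tr_form_ge0.
- exact: mulr_ge0 (ltW hg) (tr_form_ge0 _ h1).
rewrite mulf_eq0 (gt_eqF hg) /= => /andP[/eqP hY /eqP hZ].
rewrite sub_capmx /kerC !sub_kermx -/Y -/Z.
by rewrite (tr_form_eq0 hd hY) (tr_form_eq0 h1 hZ) !eqxx.
Qed.

Lemma ctmxK m n (X : 'M[C]_(m, n)) : ctmx (ctmx X) = X.
Proof.
by apply/matrixP => i j; rewrite /ctmx !mxE conjCK.
Qed.

Lemma ctmxD m n (X Y : 'M[C]_(m, n)) : ctmx (X + Y) = ctmx X + ctmx Y.
Proof. by apply/matrixP => i j; rewrite /ctmx !mxE rmorphD. Qed.

Lemma ctmxZ m n a (X : 'M[C]_(m, n)) : ctmx (a *: X) = (Num.conj a) *: ctmx X.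
Proof. by apply/matrixP => i j; rewrite /ctmx !mxE rmorphM. Qed.

Lemma ctmx0 m n : ctmx (0 : 'M[C]_(m, n)) = 0.
Proof. by apply/matrixP => i j; rewrite /ctmx !mxE rmorph0. Qed.

Lemma ctmx_diag n (d : 'rV[C]_n) : (forall i, 0 < d 0 i) -> ctmx (diag_mx d) = diag_mx d.
Proof.
move=> hd; apply/matrixP => i j; rewrite /ctmx !mxE.
case: eqVneq => [->|_]; last by rewrite !mulr0n rmorph0.
by rewrite !mulr1n conj_Creal // gtr0_real.
Qed.

Lemma tstar_ctmx n (X : 'M[C]_n) : (X ^t*)%sesqui = ctmx X.
Proof. by rewrite /ctmx map_trmx. Qed.

Lemma char_poly_sim n (U D : 'M[C]_n) : U \in unitmx ->
  char_poly (invmx U *m D *m U) = char_poly D.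
Proof.
move=> Uu; rewrite /char_poly.
have -> : char_poly_mx (invmx U *m D *m U) =
   map_mx polyC (invmx U) *m char_poly_mx D *m map_mx polyC U.
  rewrite /char_poly_mx mulmxBr mulmxBl !map_mxM; congr (_ - _).
  by rewrite -mulmxA -scalar_mxC mulmxA -map_mxM mulVmx // map_mx1 mul1mx.
rewrite !det_mulmx !det_map_mx.
by rewrite mulrC mulrA -rmorphM -det_mulmx mulmxV // det1 rmorph1 mul1r.
Qed.

Lemma char_poly_diag n (d : 'rV[C]_n) :
  char_poly (diag_mx d) = \prod_(i < n) ('X - (d 0 i)%:P).
Proof.
rewrite char_poly_trig ?diag_mx_is_trig //.
by apply: eq_bigr => i _; rewrite mxE eqxx mulr1n.
Qed.

Lemma char_poly_prod0 n (P R : 'M[C]_n) : P *m R = 0 ->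
  char_poly P * char_poly R = 'X^n * char_poly (P + R).
Proof.
move=> PR; rewrite /char_poly -det_mulmx -detZ; congr (\det _).
rewrite /char_poly_mx mulmxBl !mulmxBr -map_mxM PR map_mx0 subr0.
rewrite !mul_scalar_mx.
by rewrite map_mxD scalerBr scalerDr opprD addrA mul_mx_scalar addrAC.
Qed.

Lemma rank_diag n (d : 'rV[C]_n) :
  \rank (diag_mx d) = (\sum_(i < n) nat_of_bool (d 0%R i != 0%R))%N.
Proof.
elim: n d => [|n IH] d; first by rewrite big_ord0 thinmx0 mxrank0.
suff key : forall d : 'rV[C]_(1 + n), \rank (diag_mx d) =
   (\sum_(i < 1 + n) nat_of_bool (d 0%R i != 0%R))%N by exact: key.
move=> {}d; rewrite -[d]hsubmxK.
rewrite diag_mx_row rank_diag_block_mx IH.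
rewrite big_split_ord /=.
congr (_ + _)%N; last by apply: eq_bigr => i _; rewrite row_mxEr.
rewrite big_ord1 row_mxEl rank_rV; congr (nat_of_bool _).
apply/idP/idP; apply: contra => /eqP H.
  apply/eqP/matrixP => i j; rewrite !ord1 !mxE eqxx mulr1n.
  by move: H; rewrite mxE.
by have := congr1 (fun M : 'M_1 => M 0 0) H; rewrite !mxE eqxx mulr1n => ->.
Qed.


Lemma prod_nseq0 k : \prod_(x <- nseq k (0 : C)) ('X - x%:P) = 'X^k.
Proof.
elim: k => [|k IH]; first by rewrite big_nil expr0.
by rewrite /= big_cons IH subr0 exprS.
Qed.

Lemma prodXsubC_0 (s : seq C) : all (fun x => 0 < x) s ->
  (\prod_(x <- s) ('X - x%:P)).[0] != 0.
Proof.
move=> hs; rewrite horner_prod prodf_seq_neq0; apply/allP => x xs /=.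
by rewrite hornerXsubC sub0r oppr_eq0 gt_eqF // (allP hs).
Qed.

Lemma char_normal n (X : 'M[C]_n) : ctmx X = X ->
  exists U s, [/\ U \in unitmx, X = invmx U *m diag_mx s *m U &
     char_poly X = \prod_(i < n) ('X - (s 0 i)%:P)].
Proof.
move=> hX; have nX : X \is normalmx by apply/normalmxP; rewrite tstar_ctmx hX.
have EX := orthomx_spectralP nX.
exists (spectralmx X), (spectral_diag X); split => //; first exact: spectral_unit.
by rewrite {1}EX char_poly_sim ?spectral_unit // char_poly_diag.
Qed.

End Aux.
Lemma main_gen (C : numClosedFieldType) n m (A : 'M[C]_n) (B : 'M[C]_(m, n))
    (d : 'rV[C]_n) (g : C) (hd : forall i, 0 < d 0 i) (hg : 0 < g)
    (hBA : B *m A = 0)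
    (N0A : nat) (lamA : seq C) (N0B : nat) (lamB : seq C)
    (hA : eig_zeros_then (A *m diag_mx d *m ctmx A) N0A lamA)
    (hB : eig_zeros_then (ctmx B *m B) N0B lamB) :
  exists lam : seq C,
    eig_zeros_then (A *m diag_mx d *m ctmx A + g *: (ctmx B *m B))
      (\rank (kerC (ctmx A) :&: kerC B)%MS) lam
    /\ perm_eq lam (lamA ++ map (fun x => g * x) lamB).
Proof.
case: hA => chP posA _; case: hB => chQ posB _.
set P := A *m diag_mx d *m ctmx A in chP *; set Q := ctmx B *m B in chQ *.
have ctP : ctmx P = P by rewrite /P !ctmxM ctmxK ctmx_diag // mulmxA.
have ctQ : ctmx Q = Q by rewrite /Q ctmxM ctmxK.
have greal : Num.conj g = g by rewrite conj_Creal // gtr0_real.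
have ctM : ctmx (P + g *: Q) = P + g *: Q by rewrite ctmxD ctmxZ ctP ctQ greal.
have [U [s [Uu EM chM]]] := char_normal ctM.
have [V [t [Vu EQ chQ']]] := char_normal ctQ.
have posgB : all (fun x => 0 < x) (map (fun x => g * x) lamB).
  by rewrite all_map; apply/allP => x xs /=; rewrite mulr_gt0 // (allP posB).
set pA := \prod_(x <- lamA) ('X - x%:P).
set pB := \prod_(x <- map (fun x => g * x) lamB) ('X - x%:P).
have chgQ : char_poly (g *: Q) = 'X^N0B * pB.
  have -> : g *: Q = invmx V *m diag_mx (g *: t) *m V.
    rewrite {1}EQ scalemxAl scalemxAr.
    by congr (_ *m _ *m _); apply/matrixP => i j; rewrite !mxE mulrnAr.
  rewrite char_poly_sim // char_poly_diag.
  have pe : perm_eq [seq t 0 i | i <- index_enum 'I_n] (nseq N0B 0 ++ lamB).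
    apply: prod_XsubC_eq; rewrite big_map big_cat /= prod_nseq0 -chQ chQ'.
    by [].
  have pe2 := perm_map (fun x => g * x) pe.
  rewrite (_ : \prod_(i < n) _ = \prod_(x <- map (fun x => g * x)
     [seq t 0 i | i <- index_enum 'I_n]) ('X - x%:P)); last first.
    by rewrite -map_comp big_map; apply: eq_bigr => i _; rewrite mxE.
  rewrite (perm_big _ pe2) map_cat big_cat /= map_nseq mulr0 prod_nseq0.
  by [].
have ABc : ctmx A *m ctmx B = 0 by rewrite -ctmxM hBA ctmx0.
have PQ0 : P *m (g *: Q) = 0.
  by rewrite /P /Q -scalemxAr mulmxA -(mulmxA _ (ctmx A)) ABc mulmx0 mul0mx scaler0.
have key := char_poly_prod0 PQ0; rewrite chP chgQ chM in key.
set z := (\sum_(i < n) nat_of_bool (s 0%R i == 0%R))%N.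
set pM := \prod_(i < n | s 0 i != 0) ('X - (s 0 i)%:P).
have splitM : \prod_(i < n) ('X - (s 0 i)%:P) = 'X^z * pM.
  rewrite (bigID (fun i => s 0 i == 0)) /=; congr (_ * _).
  rewrite (eq_bigr (fun _ => 'X)); last by move=> i /eqP ->; rewrite subr0.
  rewrite prodr_const; congr ('X ^+ _).
  rewrite -sum1_card /z big_mkcond; apply: eq_bigr => i _.
  rewrite (_ : i \in _ = (s 0 i == 0)) //; by case: (_ == _).
have hpM0 : pM.[0] != 0.
  rewrite horner_prod prodf_seq_neq0; apply/allP => i _; apply/implyP => h.
  by rewrite hornerXsubC sub0r oppr_eq0.
have EpM : pA * pB = pM.
  have key2 : 'X^(N0A + N0B) * (pA * pB) = 'X^(n + z) * pM.
    by rewrite !exprD mulrACA key splitM mulrA.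
  apply: (Xn_cancel _ hpM0 key2).
  by rewrite hornerM mulf_neq0 // prodXsubC_0.
have rkM : \rank (P + g *: Q)%R = (\sum_(i < n) nat_of_bool (s 0%R i != 0%R))%N.
  rewrite {1}EM mxrankMfree ?row_free_unit // -mxrank_tr trmx_mul.
  by rewrite mxrankMfree ?row_free_unit ?unitmx_tr ?unitmx_inv // tr_diag_mx rank_diag.
have zn : (z + \sum_(i < n) nat_of_bool (s 0%R i != 0%R))%N = n.
  rewrite -big_split /= (eq_bigr (fun _ => 1%N)) => [|i _]; last by case: (_ == _).
  by rewrite sum1_card card_ord.
have dimE : \rank (kerC (ctmx A) :&: kerC B)%MS = z.
  by rewrite (ker_eq _ _ hd hg) mxrank_ker mxrank_tr rkM -{1}zn addnK.
exists (sort <=%R (lamA ++ map (fun x => g * x) lamB)); split; last by rewrite perm_sort.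
split.
- rewrite dimE chM splitM -EpM (perm_big _ (permEl (perm_sort _ _))) big_cat.
  by [].
- by rewrite all_sort all_cat posA posgB.
- apply: (@sort_sorted_in _ [pred x : C | 0 < x]); last by rewrite all_cat posA posgB.
  by move=> x y hx hy; apply: real_leVge; apply: gtr0_real.
Qed.

End Helpers.

Theorem proposition3p2 (C : numClosedFieldType) (N : nat) (hN : (1 <= N)%N)
    (A : 'M[C]_(3 * N ^ 3)) (B : 'M[C]_(N ^ 3, 3 * N ^ 3))
    (d : 'rV[C]_(3 * N ^ 3)) (gamma : C)
    (hd : forall i, 0 < d 0 i) (hgamma : 0 < gamma)
    (hBA : B *m A = 0)
    (N0A : nat) (lamA : seq C) (N0B : nat) (lamB : seq C)
    (hA : eig_zeros_then (A *m diag_mx d *m ctmx A) N0A lamA)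
    (hB : eig_zeros_then (ctmx B *m B) N0B lamB) :
  let dimH := \rank (kerC (ctmx A) :&: kerC B)%MS in
  exists lam : seq C,
    eig_zeros_then (A *m diag_mx d *m ctmx A + gamma *: (ctmx B *m B)) dimH lam
    /\ perm_eq lam (lamA ++ map (fun x => gamma * x) lamB).
Proof.
move=> dimH; exact: (main_gen hd hgamma hBA hA hB).
Qed.
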